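(* If $I\subseteq\Bbbk[x_0,\dots,x_n]$ is a saturated Borel ideal and $I'$ is any expansion of $I$, then $P_{I'}=1+P_I$.
   Context: $\Bbbk$ is an algebraically closed field; $P_J$ denotes the Hilbert polynomial of $\Bbbk[x_0,\dots,x_n]/J$. A monomial ideal $I$ is Borel if for every monomial $m\in I$, every $x_j\mid m$ and every $i<j$, $mx_i/x_j\in I$; it is saturated if $(I:\langle x_0,\dots,x_n\rangle^\infty)=I$. For a monomial $g$, $\max g$ is the largest $j$ with $x_j\mid g$. A minimal monomial generator $g$ of a saturated Borel ideal $I$ is expandable if the set $\{gx_{i+1}/x_i: x_i\mid g,\ 0\le i<n-1\}$ contains no minimal monomial generator of $I$; the expansion of $I$ at $g$ is the ideal $I'$ generated by all monomials of $I$ not divisible by $g$ together with the monomials $gx_j$ for $\max g\le j\le n-1$. (The generator $1$ of the unit ideal is vacuously expandable, with expansion $\langle x_0,\dots,x_{n-1}\rangle$.) *)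

(* Defs.v *)
(* Monomials of k[x_0,...,x_n] are exponent vectors. *)
From mathcomp Require Import all_boot all_order all_algebra.
Set Implicit Arguments. Unset Strict Implicit. Unset Printing Implicit Defensive.
Import GRing.Theory Num.Theory.

Definition mono (n : nat) := {ffun 'I_n.+1 -> nat}.

Definition mdeg n (a : mono n) : nat := \sum_(i < n.+1) a i.

Definition mmul n (a b : mono n) : mono n := [ffun i => a i + b i].

Definition mvar n (j : 'I_n.+1) : mono n := [ffun i => nat_of_bool (i == j)].

Definition mdiv n (a b : mono n) : Prop := forall i, a i <= b i.

(* m * x_i / x_j  (only meaningful when x_j | m) *)
Definition mswap n (m : mono n) (i j : nat) : mono n :=
  [ffun k : 'I_n.+1 => m k + nat_of_bool (nat_of_ord k == i)
                          - nat_of_bool (nat_of_ord k == j)].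

(* max g : largest j with x_j | g; by convention 0 for g = 1 *)
Definition mmax n (g : mono n) : nat := \max_(i < n.+1 | 0 < g i) (i : nat).

(* A monomial ideal is represented by the set of monomials it contains;
   such a set is an ideal's monomial set iff it is closed under
   multiplication by monomials. *)
Definition monomial_ideal n (I : mono n -> Prop) : Prop :=
  forall a b, I a -> I (mmul a b).

Definition borel n (I : mono n -> Prop) : Prop :=
  monomial_ideal I /\
  forall (m : mono n) (i j : 'I_n.+1), I m -> 0 < m j -> (i < j)%N ->
    I (mswap m i j).

(* (I : <x_0,...,x_n>^oo) = I, for a monomial ideal:
   a monomial f lies in the saturation iff f * <x_0..x_n>^k is in I for some k,
   i.e. f*b in I for every monomial b of degree k. *)
Definition saturated n (I : mono n -> Prop) : Prop :=
  forall f : mono n,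
    (exists k, forall b : mono n, mdeg b = k -> I (mmul f b)) -> I f.

Definition min_gen n (I : mono n -> Prop) (g : mono n) : Prop :=
  I g /\ forall h, I h -> mdiv h g -> h = g.

Definition expandable n (I : mono n -> Prop) (g : mono n) : Prop :=
  min_gen I g /\
  forall i : nat, (i.+1 < n)%N -> forall Hi : (i < n.+1)%N,
    0 < g (Ordinal Hi) -> ~ min_gen I (mswap g i.+1 i).

Definition expansion n (I : mono n -> Prop) (g : mono n) : mono n -> Prop :=
  fun m =>
    (exists s, I s /\ ~ mdiv g s /\ mdiv s m) \/
    (exists j : 'I_n.+1, (mmax g <= j)%N /\ (j < n)%N /\ mdiv (mmul g (mvar j)) m).

(* Hilbert function of k[x_0..x_n]/I in degree d equals c:
   the standard monomials of degree d form a k-basis, so this is the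
   number of monomials of degree d not in I. *)
Definition hilb_fun_is n (I : mono n -> Prop) (d c : nat) : Prop :=
  exists s : seq (mono n), uniq s /\ size s = c /\
    forall m, m \in s <-> (mdeg m = d /\ ~ I m).

Definition hilbert_poly n (I : mono n -> Prop) (p : {poly rat}) : Prop :=
  exists d0, forall d, (d0 <= d)%N ->
    exists c, hilb_fun_is I d c /\ (p.[d%:R] = c%:R)%R.

(* Main.v *)
Require Import Defs.
From mathcomp Require Import all_boot all_order all_algebra.
From Stdlib Require Import ClassicalEpsilon.
From mathcomp Require Import zify ring lra.
Set Implicit Arguments. Unset Strict Implicit. Unset Printing Implicit Defensive.
Import GRing.Theory Num.Theory.


Section Anti.
Local Open Scope ring_scope.
Definition ff (s : nat) : {poly rat} := \prod_(i < s) ('X - (i%:R)%:P).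

Lemma ff_eval s x : (ff s).[x] = \prod_(i < s) (x - i%:R).
Proof. by rewrite horner_prod; apply eq_bigr => i _; rewrite hornerXsubC. Qed.

Lemma ff_diff s x : (ff s.+1).[x+1] - (ff s.+1).[x] = s.+1%:R * (ff s).[x].
Proof.
rewrite !ff_eval big_ord_recl big_ord_recr /=.
have -> : \prod_(i < s) (x + 1 - (bump 0 i)%:R) = \prod_(i < s) (x - i%:R).
  by apply eq_bigr => i _; rewrite /bump /= add1n mulrSr; ring.
set P := \prod_(i < s) _. rewrite mulrSr. ring.
Qed.

Lemma size_ff s : size (ff s) = s.+1.
Proof.
rewrite /ff -(big_map (fun i : 'I_s => (i : nat)%:R) xpredT (fun y => 'X - y%:P)).
by rewrite size_prod_XsubC size_map -[index_enum _]enumT size_enum_ord.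
Qed.

Lemma ff_monic s : ff s \is monic.
Proof. by apply monic_prod => i _; exact: monicXsubC. Qed.

Lemma anti (p : {poly rat}) : exists Q : {poly rat}, forall x, Q.[x+1] - Q.[x] = p.[x].
Proof.
suff H : forall s (p : {poly rat}), (size p <= s)%N -> exists Q : {poly rat}, forall x, Q.[x+1] - Q.[x] = p.[x].
  exact: (H _ p (leqnn _)).
elim=> [|s IH] q Hq.
  move: Hq; rewrite leqn0 size_poly_eq0 => /eqP ->.
  by exists 0 => x; rewrite !horner0 subrr.
set c := q`_s.
have Hs : (size (q - c *: ff s)%R <= s)%N.
  apply/leq_sizeP => j Hj; rewrite coefB coefZ.
  move: Hj; rewrite leq_eqVlt => /orP [/eqP <-|Hj].
    have : (ff s)`_s = 1.
      by have := ff_monic s; rewrite monicE /lead_coef size_ff => /eqP.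
    by move=> ->; rewrite mulr1 subrr.
  rewrite (nth_default 0 (leq_trans Hq Hj)).
  by rewrite (nth_default 0 (_ : (size (ff s) <= j)%N)) ?size_ff // mulr0 subrr.
have [Q' HQ'] := IH _ Hs.
exists (Q' + (c / s.+1%:R) *: ff s.+1) => x.
rewrite !hornerD !hornerZ.
have -> : Q'.[x + 1] + c / s.+1%:R * (ff s.+1).[x + 1] - (Q'.[x] + c / s.+1%:R * (ff s.+1).[x])
  = (Q'.[x + 1] - Q'.[x]) + c / s.+1%:R * ((ff s.+1).[x + 1] - (ff s.+1).[x]) by ring.
rewrite HQ' ff_diff.
have -> : (q - c *: ff s).[x] = q.[x] - c * (ff s).[x] by rewrite !hornerE.
have Hn : (s.+1%:R : rat) != 0 by rewrite pnatr_eq0.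
by field; rewrite nat1r.
Qed.

Definition evpoly (f : nat -> nat) := exists (p : {poly rat}) (d0 : nat),
  forall d, (d0 <= d)%N -> (f d)%:R = p.[d%:R].

Lemma evpoly_ext f g : evpoly f -> (exists d1, forall d, (d1 <= d)%N -> f d = g d) -> evpoly g.
Proof.
move=> [p [d0 H]] [d1 H1]; exists p, (maxn d0 d1) => d Hd.
rewrite -H1; last by lia. by apply H; lia.
Qed.

Lemma evpoly0 : evpoly (fun _ => 0%N).
Proof. by exists 0, 0%N => d _; rewrite horner0. Qed.

Lemma evpolyD f g : evpoly f -> evpoly g -> evpoly (fun d => f d + g d)%N.
Proof.
move=> [p [d0 H]] [q [d1 H1]]; exists (p + q), (maxn d0 d1) => d Hd.
by rewrite natrD hornerD H ?H1 //; lia.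
Qed.

Lemma evpoly_shift f k : evpoly f -> evpoly (fun d => f (d - k)%N).
Proof.
move=> [p [d0 H]]; exists (p \Po ('X - (k%:R)%:P)), (d0 + k)%N => d Hd.
rewrite horner_comp hornerXsubC H; last by lia.
by rewrite natrB //; lia.
Qed.

Lemma evpoly_bigsum K (f : nat -> nat -> nat) : (forall k, (k < K)%N -> evpoly (f k)) ->
  evpoly (fun d => \sum_(k < K) f k d)%N.
Proof.
elim: K => [|K IH] H.
  by apply: evpoly_ext evpoly0 _; exists 0%N => d _; rewrite big_ord0.
apply: evpoly_ext (evpolyD (IH _) (H K _)) _ => //.
  by move=> k Hk; apply H; lia.
by exists 0%N => d _; rewrite big_ord_recr.
Qed.

Lemma evpoly_psum f : evpoly f -> evpoly (fun d => \sum_(j < d.+1) f j)%N.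
Proof.
move=> [p [d0 H]]; have [Q HQ] := anti p.
exists (Q \Po ('X + 1) - (Q.[d0%:R])%:P + (((\sum_(j < d0) f j)%N)%:R)%:P), d0 => d Hd.
rewrite !hornerE horner_comp !hornerE /=.
rewrite -(subnKC Hd); elim: (d - d0)%N => [|t IHt].
  by rewrite addn0 big_ord_recr /= natrD H // -HQ addrC.
rewrite addnS big_ord_recr /= natrD IHt H; last by lia.
rewrite -HQ -natr1. set S := (\sum_(j < d0) f j)%:R. set a := Q.[_ + 1]. set b := Q.[_ + 1]. ring.
Qed.
End Anti.

Definition pb (P : Prop) : bool := if excluded_middle_informative P then true else false.
Lemma pbP P : reflect P (pb P).
Proof. by rewrite /pb; case: excluded_middle_informative => H; constructor. Qed.
Lemma pb_iff (P Q : Prop) : (P <-> Q) -> pb P = pb Q.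
Proof. by move=> H; apply/pbP/pbP; apply H. Qed.

Fixpoint mons N d : seq (seq nat) :=
  match N with
  | 0 => if d is 0 then [:: [::]] else [::]
  | N'.+1 => flatten [seq [seq k :: u | u <- mons N' (d - k)] | k <- iota 0 d.+1]
  end.

Definition ideal (J : seq nat -> Prop) := forall a b, all2 leq a b -> J a -> J b.

Lemma all2_refl s : all2 leq s s.
Proof. by elim: s => //= x s ->; rewrite leqnn. Qed.

Lemma all2_size a b : all2 leq a b -> size a = size b.
Proof. by elim: a b => [|x a IH] [|y b] //= /andP [_ /IH ->]. Qed.

Lemma dickson N J : ideal J -> exists G : seq (seq nat),
  (forall g, g \in G -> J g) /\
  forall m, size m = N -> J m -> exists2 g, g \in G & all2 leq g m.
Proof.
elim: N J => [|N IH] J HJ.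
  case: (classic (J [::])) => H0.
    exists [:: [::]]; split; first by move=> g; rewrite inE => /eqP ->.
    by move=> m /size0nil -> _; exists [::]; rewrite ?inE.
  by exists [::]; split => // m /size0nil -> /H0.
pose L := fun u => exists k, J (k :: u).
have HL : ideal L.
  by move=> a b Hab [k Hk]; exists k; apply: HJ Hk; rewrite /= leqnn.
have mono : forall k k' u, k <= k' -> J (k :: u) -> J (k' :: u).
  by move=> k k' u Hk; apply: HJ; rewrite /= Hk all2_refl.
have [G [HG1 HG2]] := IH L HL.
have [K HK] : exists K, forall g, g \in G -> J (K :: g).
  elim: G {HG2} HG1 => [|g G IHG] HG1; first by exists 0.
  have [K HK] : exists K, forall g, g \in G -> J (K :: g).
    by apply: IHG => x Hx; apply: HG1; rewrite inE Hx orbT.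
  have [k Hk] := HG1 g (mem_head _ _).
  exists (maxn K k) => x; rewrite inE => /orP [/eqP ->|Hx].
    by apply: mono Hk; apply: leq_maxr.
  by apply: mono (HK x Hx); apply: leq_maxl.
have [H [H1 H2]] : exists H : seq (seq nat), (forall h, h \in H -> J h) /\
   forall k u, k < K -> size u = N -> J (k :: u) -> exists2 h, h \in H & all2 leq h (k :: u).
  elim: (K) => [|K' [H [H1 H2]]]; first by exists [::]; split => // k u.
  have HJK : ideal (fun u => J (K' :: u)).
    by move=> a b Hab; apply: HJ; rewrite /= leqnn.
  have [GK [GK1 GK2]] := IH _ HJK.
  exists (H ++ map (cons K') GK); split.
    move=> h; rewrite mem_cat => /orP [/H1 //|/mapP [g Hg ->]]; exact: GK1.
  move=> k u; rewrite ltnS leq_eqVlt => /orP [/eqP ->|Hk] Hu Hku.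
    have [g Hg Hgu] := GK2 u Hu Hku.
    by exists (K' :: g); rewrite ?mem_cat ?map_f ?orbT //= leqnn.
  have [h Hh Hhu] := H2 k u Hk Hu Hku.
  by exists h; rewrite ?mem_cat ?Hh.
exists (H ++ map (cons K) G); split.
  by move=> h; rewrite mem_cat => /orP [/H1 //|/mapP [g Hg ->]]; exact: HK.
case=> [//|k u] /= [Hu] Hku.
case: (ltnP k K) => Hk.
  by have [h Hh Hhu] := H2 k u Hk Hu Hku; exists h; rewrite ?mem_cat ?Hh.
have [g Hg Hgu] := HG2 u Hu (ex_intro _ k Hku).
by exists (K :: g); rewrite ?mem_cat ?map_f ?orbT //= Hk.
Qed.

Definition hc (J : seq nat -> Prop) N d := count (fun s => ~~ pb (J s)) (mons N d).

Lemma mons_size N d s : s \in mons N d -> size s = N.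
Proof.
elim: N d s => [|N IH] d s.
  by case: d => [|d] //=; rewrite inE => /eqP ->.
by move/flatten_mapP => [k _ /mapP [u Hu ->]] /=; rewrite (IH _ _ Hu).
Qed.

Lemma hc_rec J N d : hc J N.+1 d = \sum_(k < d.+1) hc (fun u => J ((k : nat) :: u)) N (d - k).
Proof.
rewrite -(big_mkord xpredT (fun k => hc (fun u => J (k :: u)) N (d - k))).
rewrite {1}/hc.
have -> : mons N.+1 d = flatten [seq [seq k :: u | u <- mons N (d - k)] | k <- iota 0 d.+1] by [].
rewrite count_flatten sumnE !big_map /index_iota subn0.
by apply eq_bigr => k _; rewrite count_map.
Qed.

Lemma hilb N J : ideal J -> evpoly (hc J N).
Proof.
elim: N J => [|N IH] J HJ.
  apply: evpoly_ext evpoly0 _; exists 1 => [[|d]] //.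
pose L := fun u => exists k, J (k :: u).
have HL : ideal L.
  by move=> a b Hab [k Hk]; exists k; apply: HJ Hk; rewrite /= leqnn.
have mono : forall k k' u, k <= k' -> J (k :: u) -> J (k' :: u).
  by move=> k k' u Hk; apply: HJ; rewrite /= Hk all2_refl.
have [G [HG1 HG2]] := dickson N HL.
have [K HK] : exists K, forall g, g \in G -> J (K :: g).
  elim: G {HG2} HG1 => [|g G IHG] HG1; first by exists 0.
  have [K HK] : exists K, forall g, g \in G -> J (K :: g).
    by apply: IHG => x Hx; apply: HG1; rewrite inE Hx orbT.
  have [k Hk] := HG1 g (mem_head _ _).
  exists (maxn K k) => x; rewrite inE => /orP [/eqP ->|Hx].
    by apply: mono Hk; apply: leq_maxr.
  by apply: mono (HK x Hx); apply: leq_maxl.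
have stab : forall k u, K <= k -> size u = N -> J (k :: u) <-> J (K :: u).
  move=> k u Hk Hu; split; last exact: mono.
  move=> Hku; have [g Hg Hgu] := HG2 u Hu (ex_intro _ k Hku).
  by apply: HJ (HK g Hg); rewrite /= leqnn.
pose h k := hc (fun u => J (k :: u)) N.
have hK : forall k m, K <= k -> h k m = h K m.
  move=> k m Hk; apply: eq_in_count => s /mons_size Hs.
  by rewrite (pb_iff (stab k s Hk Hs)).
have IHk : forall k, evpoly (h k).
  by move=> k; apply: IH; move=> a b Hab; apply: HJ; rewrite /= leqnn.
apply: evpoly_ext (evpolyD (evpoly_bigsum (K := K) (f := fun k d => h k (d - k)) (fun k _ => evpoly_shift k (IHk k)))
                          (evpoly_shift K (evpoly_psum (IHk K)))) _.
exists K => d Hd.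
rewrite hc_rec.
transitivity (\sum_(0 <= k < d.+1) h k (d - k))%N; last by rewrite big_mkord.
rewrite (@big_cat_nat _ _ _ K) //=; last by lia.
rewrite big_mkord; congr (_ + _)%N.
rewrite (eq_big_nat _ _ (F2 := fun k => h K (d - k))); last by move=> k /andP [Hk _]; apply: hK.
symmetry; rewrite (@big_addn _ _ _ 0 d.+1 K) big_nat_rev /= -(subSn Hd) big_mkord; apply: eq_bigr => i _.
congr (h K _); have := ltn_ord i; lia.
Qed.

Lemma flat_uniq (s : seq nat) (T : nat -> seq (seq nat)) : uniq s -> (forall k, uniq (T k)) ->
  uniq (flatten [seq [seq k :: u | u <- T k] | k <- s]).
Proof.
move=> Hs HT; elim: s Hs => [|k s IH] //= /andP [Hk Hs].
have Hinj : injective (cons k) by move=> a b [].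
rewrite cat_uniq IH // andbT (map_inj_uniq Hinj) HT /=.
apply/hasPn => x /flatten_mapP [k' Hk' /mapP [u Hu ->]].
apply/negP => /mapP [v _ [E _]]; by move: Hk; rewrite -E Hk'.
Qed.

Lemma mons_uniq N d : uniq (mons N d).
Proof.
elim: N d => [|N IH] d; first by case: d.
by apply: flat_uniq => //; apply: iota_uniq.
Qed.

Lemma mons_mem N d s : size s = N -> sumn s = d -> s \in mons N d.
Proof.
elim: N d s => [|N IH] d [|k u].
- by move=> _ /= <-; rewrite inE.
- by [].
- by [].
move=> [Hu] Hd; apply/flatten_mapP; exists k.
  by rewrite mem_iota; move: Hd => /=; lia.
by apply: map_f; apply: IH => //; move: Hd => /= ; lia.
Qed.

Lemma mons_sum N d s : s \in mons N d -> sumn s = d.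
Proof.
elim: N d s => [|N IH] d s.
  by case: d => [|d] //=; rewrite inE => /eqP ->.
move/flatten_mapP => [k Hk /mapP [u Hu ->]] /=; rewrite (IH _ _ Hu).
by move: Hk; rewrite mem_iota; lia.
Qed.

Section Transfer.
Variable n : nat.
Definition tomono (s : seq nat) : mono n := [ffun i : 'I_n.+1 => nth 0 s i].
Definition frommono (m : mono n) : seq nat := map (fun i : 'I_n.+1 => m i) (enum 'I_n.+1).

Lemma to_from m : tomono (frommono m) = m.
Proof.
by apply/ffunP => i; rewrite ffunE (nth_map ord0) ?size_enum_ord // nth_ord_enum.
Qed.

Lemma size_from m : size (frommono m) = n.+1.
Proof. by rewrite size_map size_enum_ord. Qed.

Lemma mdeg_to s : size s = n.+1 -> mdeg (tomono s) = sumn s.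
Proof.
move=> Hs; rewrite /mdeg sumnE (big_nth 0) Hs big_mkord.
by apply: eq_bigr => i _; rewrite ffunE.
Qed.

Lemma to_inj s t : size s = n.+1 -> size t = n.+1 -> tomono s = tomono t -> s = t.
Proof.
move=> Hs Ht E; apply: (@eq_from_nth _ 0); first by rewrite Hs Ht.
move=> i; rewrite Hs => Hi.
by have := congr1 (fun f : mono n => f (Ordinal Hi)) E; rewrite !ffunE.
Qed.

Lemma all2_nth a b i : all2 leq a b -> nth 0 a i <= nth 0 b i.
Proof.
elim: a b i => [|x a IH] [|y b] [|i] //= /andP [H1 H2] //; exact: IH.
Qed.

Lemma hp_exists (I : mono n -> Prop) : monomial_ideal I -> exists p, hilbert_poly I p.
Proof.
move=> HI; pose J := fun s => I (tomono s).
have HJ : ideal J.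
  move=> a b Hab Ha; rewrite /J in Ha *.
  have -> : tomono b = mmul (tomono a) [ffun i : 'I_n.+1 => nth 0 b i - nth 0 a i].
    apply/ffunP => i; rewrite !ffunE subnKC //; exact: all2_nth.
  exact: HI.
have [p [d0 H]] := hilb n.+1 HJ.
exists p, d0 => d Hd; exists (hc J n.+1 d); split; last by rewrite H.
exists (map tomono (filter (fun s => ~~ pb (J s)) (mons n.+1 d))); split; [|split].
- rewrite map_inj_in_uniq ?filter_uniq ?mons_uniq //.
  move=> s t; rewrite !mem_filter => /andP [_ /mons_size Hs] /andP [_ /mons_size Ht].
  exact: to_inj.
- by rewrite size_map size_filter.
- move=> m; split.
    move=> /mapP [s]; rewrite mem_filter => /andP [/pbP HJs Hs] ->.
    by rewrite mdeg_to ?(mons_size Hs) ?(mons_sum Hs).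
  move=> [Hm HIm]; apply/mapP; exists (frommono m); last by rewrite to_from.
  rewrite mem_filter; apply/andP; split.
    by apply/pbP; rewrite /J to_from.
  apply: mons_mem; first exact: size_from.
  by rewrite -mdeg_to ?size_from // to_from.
Qed.
End Transfer.

Section B.
Variable n : nat.
Implicit Types (a b m : mono n).
Definition xpow (j : 'I_n.+1) e : mono n := [ffun i => (i == j) * e].
Local Notation NN := (@ord_max n).

Lemma mmulA a b c : mmul (mmul a b) c = mmul a (mmul b c).
Proof. by apply/ffunP => i; rewrite !ffunE addnA. Qed.
Lemma mmulC a b : mmul a b = mmul b a.
Proof. by apply/ffunP => i; rewrite !ffunE addnC. Qed.

Lemma mdeg_mmul a b : mdeg (mmul a b) = mdeg a + mdeg b.
Proof. by rewrite /mdeg -big_split; apply: eq_bigr => i _; rewrite ffunE. Qed.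

Lemma mdeg_xpow j e : mdeg (xpow j e) = e.
Proof.
rewrite /mdeg (bigD1 j) //= ffunE eqxx mul1n big1 ?addn0 // => i /negbTE Hi.
by rewrite ffunE Hi.
Qed.

Lemma mdeg_mvar (j : 'I_n.+1) : mdeg (mvar j) = 1.
Proof.
rewrite /mdeg (bigD1 j) //= ffunE eqxx big1 ?addn0 // => i /negbTE Hi.
by rewrite ffunE Hi.
Qed.

Lemma le_mdeg b i : b i <= mdeg b.
Proof. by rewrite /mdeg (bigD1 i) //= leq_addr. Qed.

Lemma div_mul a b : mdiv a b -> b = mmul a [ffun i => b i - a i].
Proof. by move=> H; apply/ffunP => i; rewrite !ffunE subnKC. Qed.

Variable I : mono n -> Prop.
Hypothesis hB : borel I.
Hypothesis hS : saturated I.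

Lemma idiv a b : I a -> mdiv a b -> I b.
Proof. by move=> Ha /div_mul ->; apply: hB.1. Qed.

Lemma eq_ord_nat (k i : 'I_n.+1) : (nat_of_ord k == nat_of_ord i) = (k == i).
Proof. by []. Qed.

Lemma lemA a (i : 'I_n.+1) : I (mmul a (mvar NN)) -> I (mmul a (mvar i)).
Proof.
move=> H; case: (eqVneq i NN) => [-> //|Hi].
have Hin : i < NN by rewrite ltn_neqAle -ltnS ltn_ord andbT; exact: Hi.
have := hB.2 _ i NN H _ Hin; rewrite !ffunE eqxx addn1 => /(_ isT).
congr I; apply/ffunP => k; rewrite !ffunE !eq_ord_nat.
by rewrite addnAC addnK.
Qed.

Lemma lemB e m b : mdeg b = e -> I (mmul m (xpow NN e)) -> I (mmul m b).
Proof.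
elim: e m b => [|e IH] m b Hb H.
  have -> : b = xpow NN 0.
    apply/ffunP => i; rewrite ffunE muln0; apply/eqP; rewrite -leqn0 -Hb; exact: le_mdeg.
  exact: H.
case: (pickP (fun i => 0 < b i)) => [i Hi|H0]; last first.
  move: Hb; rewrite /mdeg big1 // => i _; have := H0 i; rewrite lt0n => /negbFE /eqP.
  by [].
pose b' : mono n := [ffun k => b k - (k == i)].
have Eb : b = mmul b' (mvar i).
  apply/ffunP => k; rewrite !ffunE; case: (eqVneq k i) => [->|] /=; last by rewrite subn0 addn0.
  by rewrite subn1 addn1 prednK.
have Hb' : mdeg b' = e by move: Hb; rewrite Eb mdeg_mmul mdeg_mvar addn1 => [[]].
have Ex : xpow NN e.+1 = mmul (mvar NN) (xpow NN e).
  by apply/ffunP => k; rewrite !ffunE mulnS.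
have := IH (mmul m (mvar NN)) b' Hb'; rewrite mmulA -Ex => /(_ H).
rewrite mmulA (mmulC (mvar NN)) -mmulA => /(lemA i).
by rewrite mmulA -Eb.
Qed.

Lemma strip m e : I (mmul m (xpow NN e)) -> I m.
Proof. move=> H; apply: hS; exists e => b Hb; exact: lemB Hb H. Qed.

Variable g : mono n.
Hypothesis Hg : min_gen I g.

Lemma mmax_pos : 0 < mmax g -> exists t : 'I_n.+1, (t : nat) = mmax g /\ 0 < g t.
Proof.
move=> Hm; case: (pickP (fun i => 0 < g i)) => [i Hi|H0]; last first.
  by move: Hm; rewrite /mmax big_pred0.
have Hc : 0 < #|[pred i | 0 < g i]| by apply/card_gt0P; exists i; rewrite inE.
have [i0 Hi0 E] := @eq_bigmax_cond _ [pred i | 0 < g i] (fun i => (i : nat)) Hc.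
exists i0; split; last by move: Hi0; rewrite inE.
by rewrite -E.
Qed.

Lemma sub_exp m : expansion I g m -> I m.
Proof.
case=> [[s [Is [_ D]]]|[j [_ [_ D]]]]; first exact: idiv Is D.
apply: idiv D; apply: hB.1; exact: Hg.1.
Qed.

Lemma key m : I m -> ~ expansion I g m -> exists k, m = mmul g (xpow NN k).
Proof.
move=> Im He.
have gm : mdiv g m.
  case: (classic (mdiv g m)) => // H; exfalso; apply: He; left; exists m; split; [done|split; [done|by move=> i]].
have eqj : forall j : 'I_n.+1, j < n -> m j = g j.
  move=> j Hj; apply/eqP; rewrite eqn_leq (gm j) andbT leqNgt; apply/negP => Hlt.
  case: (leqP (mmax g) j) => Hmj.
    apply: He; right; exists j; split => //; split => // k; rewrite !ffunE.
    by case: (eqVneq k j) => [->|Hkj] /=; [rewrite addn1 | rewrite addn0 (gm k)].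
  have [t [Ht Hgt]] := mmax_pos (leq_ltn_trans (leq0n j) Hmj).
  have Hjt : j < t by rewrite Ht.
  have Ih := hB.2 g j t Hg.1 Hgt Hjt.
  apply: He; left; exists (mswap g j t); split => //; split.
    move=> D; have := D t; rewrite ffunE eqxx.
    have -> : (nat_of_ord t == nat_of_ord j) = false by apply/negbTE; rewrite neq_ltn Hjt orbT.
    by rewrite addn0 subn1 leqNgt /= ltn_predL Hgt.
  move=> k; rewrite ffunE.
  case: (eqVneq k j) => [->|Hkj].
    by rewrite eqxx /= (_ : (nat_of_ord j == nat_of_ord t) = false) ?subn0 ?addn1 //; apply/negbTE; rewrite neq_ltn Hjt.
  rewrite eq_ord_nat (negbTE Hkj) addn0.
  by apply: leq_trans (leq_subr _ _) (gm k).
exists (m NN - g NN); apply/ffunP => k; rewrite !ffunE.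
case: (eqVneq k NN) => [->|Hk] /=; first by rewrite mul1n subnKC.
rewrite mul0n addn0 eqj //.
by rewrite ltn_neqAle -ltnS ltn_ord andbT; exact: Hk.
Qed.

Lemma notexp k : ~ expansion I g (mmul g (xpow NN k)).
Proof.
case=> [[s [Is [nd D]]]|[j [_ [Hj D]]]].
  pose s' : mono n := [ffun i => if i == NN then 0 else s i].
  have Es : s = mmul s' (xpow NN (s NN)).
    by apply/ffunP => i; rewrite !ffunE; case: (eqVneq i NN) => [->|] /=; rewrite ?mul1n ?mul0n ?addn0.
  have Is' : I s' by apply: (@strip _ (s NN)); rewrite -Es.
  have Ds' : mdiv s' g.
    move=> i; rewrite ffunE; case: (eqVneq i NN) => [//|Hi].
    by have := D i; rewrite !ffunE (negbTE Hi) mul0n addn0.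
  have Eg := Hg.2 _ Is' Ds'.
  by apply: nd => i; rewrite -Eg ffunE; case: ifP.
have := D j; rewrite !ffunE eqxx.
have -> : (j == NN) = false.
  by apply/negbTE; rewrite neq_ltn Hj.
by rewrite mul0n addn0 addn1 ltnn.
Qed.
End B.

Theorem lemma5p5 (n : nat) (I : mono n -> Prop) (g : mono n) :
  borel I -> saturated I -> expandable I g ->
  exists p : {poly rat},
    hilbert_poly I p /\ hilbert_poly (expansion I g) (1 + p)%R.
Proof.
move=> hB hS [Hg _].
have [p Hp] := hp_exists hB.1.
exists p; split => //.
move: Hp => [d0 H]; exists (maxn d0 (mdeg g)) => d Hd.
have [c [[s [Us [Ss Ms]]] Hc]] := H d (leq_trans (leq_maxl _ _) Hd).
exists c.+1; split; last by rewrite !hornerE Hc -natr1 addrC.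
pose m0 := mmul g (xpow ord_max (d - mdeg g)).
have Im0 : I m0 by apply: hB.1; exact: Hg.1.
exists (m0 :: s); split; [|split].
- rewrite /= Us andbT; apply/negP => /Ms [_]; exact.
- by rewrite /= Ss.
move=> m; rewrite inE; split.
  case/orP => [/eqP ->|/Ms [Hm HnI]].
    split; last exact: (notexp hB hS Hg).
    rewrite mdeg_mmul mdeg_xpow; move: Hd; lia.
  by split => // /(sub_exp hB Hg).
move=> [Hm Hne]; case: (classic (I m)) => Im; last by apply/orP; right; apply/Ms.
have [k Ek] := key hB Hg Im Hne.
apply/orP; left; apply/eqP; rewrite Ek /m0; congr (mmul g (xpow _ _)).
by move: Hm; rewrite Ek mdeg_mmul mdeg_xpow; lia.
Qed.
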